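(* Let $N\ge5$ be odd. Let $h=(h_\alpha,h_\beta,h_1,\dots,h_{N-1})$ and $h'=(h'_\alpha,h'_\beta,h'_1,\dots,h'_{N-1})$ be real parameter vectors with all entries nonzero, and let $S$ be a real nonsingular $(N+1)\times(N+1)$ matrix satisfying $$S\tilde A(h)=\tilde A(h')S,\qquad Se_1=e_1,\qquad e_2^TS=e_2^T,$$ where $\tilde A$ is defined in the context. Then for every $k$ with $3\le k\le N-1$, the first $k$ columns of $S$ are $e_1,\ e_2,\ \varepsilon_3e_3,\ \dots,\ \varepsilon_ke_k$ with $\varepsilon_j\in\{1,-1\}$, and moreover $h_\alpha=h'_\alpha$, $|h_\beta|=|h'_\beta|$ and $|h_j|=|h'_j|$ for all $1\le j\le k-2$.
   Context: For an integer $N\ge1$ and real parameters $h=(h_\alpha,h_\beta,h_1,\dots,h_{N-1})$, set $(c_1,c_2,c_3,\dots,c_{N+1})=(h_\alpha,h_\beta,h_1,\dots,h_{N-1})$ and let $A(h)$ be the real $(N+2)\times(N+2)$ tridiagonal matrix with $A_{j,j+1}=c_j$, $A_{j+1,j}=-c_j$ for $j=1,\dots,N+1$ and all other entries zero. For odd $N$ and all parameters nonzero, define the $(N+1)\times(N+1)$ matrix $\tilde A(h)$ as follows (with the conventions $h_{-1}:=h_\alpha$, $h_0:=h_\beta$): its first $N$ columns coincide with the first $N$ columns of the leading $(N+1)\times(N+1)$ principal submatrix of $A(h)$, i.e. $\tilde A_{jl}=A_{jl}$ for $1\le j\le N+1$, $1\le l\le N$; its last column has $\tilde A_{k,N+1}=0$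 for even $k$ and, for odd $k=2i-1$ ($1\le i\le (N+1)/2$), $$\tilde A_{2i-1,N+1}=h_{N-1}^2\,\frac{\prod_{j=i}^{(N-1)/2}h_{2j-2}}{\prod_{j=i}^{(N+1)/2}h_{2j-3}}+\delta_{i,(N+1)/2}\,h_{N-2}.$$ (In particular $\tilde A_{N,N+1}=h_{N-2}+h_{N-1}^2/h_{N-2}$ and $\tilde A_{N+1,N+1}=0$.) This matrix is the system matrix of the minimal (observable) subsystem obtained from $(A,e_1,e_2^T)$ for odd $N$. $e_j$ denotes the $j$-th standard basis vector; empty products equal $1$. *)

(* Defs.v *)
(* The field of reals is modelled by an arbitrary
   realFieldType R (the statement is purely algebraic). *)
From HB Require Import structures.
From mathcomp Require Import all_boot all_order all_algebra.
Set Implicit Arguments. Unset Strict Implicit. Unset Printing Implicit Defensive.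
Import Order.TTheory GRing.Theory Num.Theory.
Local Open Scope ring_scope.

(* Parameter vector convention: hv : nat -> R with
     hv 0 = h_alpha, hv 1 = h_beta, hv (j+1) = h_j  (1 <= j <= N-1),
   i.e. h_j = hv (j+1) for all j >= -1 (h_{-1} = h_alpha, h_0 = h_beta),
   and hv i = c_{i+1} in the notation (c_1,...,c_{N+1}) of the paper.
   Only hv 0, ..., hv N are relevant. *)

Definition Afull (R : ringType) (N : nat) (hv : nat -> R) : 'M[R]_(N.+2) :=
  \matrix_(i < N.+2, l < N.+2)
    (if (l : nat) == i.+1 then hv i
     else if (i : nat) == l.+1 then - hv l else 0).

(* Entry of the last column of Atilde in (0-indexed) row r.
   For r odd (paper's k = r+1 even) it is 0; for r even, k = r+1 = 2i-1 with
   i = r/2 + 1, and the entry is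
   h_{N-1}^2 * prod_{j=i}^{(N-1)/2} h_{2j-2} / prod_{j=i}^{(N+1)/2} h_{2j-3}
     + [i = (N+1)/2] h_{N-2},
   where h_{2j-2} = hv (2j-1), h_{2j-3} = hv (2j-2), h_{N-1} = hv N,
   h_{N-2} = hv (N-1). *)
Definition lastcol (R : fieldType) (N : nat) (hv : nat -> R) (r : nat) : R :=
  if odd r then 0 else
  let i := (r./2).+1 in
  hv N ^+ 2 * (\prod_(i <= j < ((N - 1)./2).+1) hv (2 * j - 1)%N)
    / (\prod_(i <= j < ((N + 1)./2).+1) hv (2 * j - 2)%N)
  + (if i == (N + 1)./2 then hv (N - 1)%N else 0).

Definition Atilde (R : fieldType) (N : nat) (hv : nat -> R) : 'M[R]_(N.+1) :=
  \matrix_(r < N.+1, q < N.+1)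
    (if (q < N)%N then Afull N hv (widen_ord (leqnSn _) r) (widen_ord (leqnSn _) q)
     else lastcol N hv r).

(* 1-indexed standard basis column vector e_j in R^n. *)
Definition ecol (R : ringType) (n j : nat) : 'cV[R]_n :=
  \col_(r < n) ((r.+1 == j)%:R).

(* Main.v *)
Require Import Defs.
From HB Require Import structures.
From mathcomp Require Import all_boot all_order all_algebra.
From mathcomp Require Import zify ring lra.
Import Order.TTheory GRing.Theory Num.Theory.
Set Implicit Arguments. Unset Strict Implicit. Unset Printing Implicit Defensive.
Local Open Scope ring_scope.

Section Aux.
Variable R : realFieldType.
Variable N : nat.

Definition at_ (hv : nat -> R) (r q : nat) : R :=
  if (q < N)%N then (if q == r.+1 then hv r else if r == q.+1 then - hv q else 0)
  else lastcol N hv r.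

Lemma Atilde_at hv (i j : 'I_N.+1) : Atilde N hv i j = at_ hv i j.
Proof. by rewrite /Atilde /Afull !mxE. Qed.

Lemma pick1 n (F : nat -> R) a : (a < n)%N ->
  (forall p, (p < n)%N -> p != a -> F p = 0) -> \sum_(p < n) F p = F a.
Proof.
move=> Ha HF; rewrite (bigD1 (Ordinal Ha)) //= big1 ?addr0 // => p Hp.
by apply: HF.
Qed.

Lemma pick2 n (F : nat -> R) a b : (a < n)%N -> (b < n)%N -> a != b ->
  (forall p, (p < n)%N -> p != a -> p != b -> F p = 0) ->
  \sum_(p < n) F p = F a + F b.
Proof.
move=> Ha Hb Hab HF; rewrite (bigD1 (Ordinal Ha)) //= (bigD1 (Ordinal Hb)) /=.
  rewrite big1 ?addr0 ?addrA // => p /andP[Hp1 Hp2].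
  by apply: HF.
by rewrite eq_sym.
Qed.

Lemma prod_nz (hv : nat -> R) a b :
  (forall j, (a <= j < b)%N -> hv j != 0) -> \prod_(a <= j < b) hv j != 0.
Proof.
move=> H; rewrite prodf_seq_neq0; apply/allP => j; rewrite mem_index_iota => Hj.
by apply/implyP => _; apply: H.
Qed.

Lemma lastcol_odd (hv : nat -> R) r : odd r -> lastcol N hv r = 0.
Proof. by rewrite /lastcol => ->. Qed.


Lemma lastcol_rec (hv : nat -> R) s : odd N -> ~~ odd s -> (s + 2 <= N - 3)%N ->
  (forall j, (j <= N)%N -> hv j != 0) ->
  hv s * lastcol N hv s = hv s.+1 * lastcol N hv s.+2.
Proof.
move=> oN es Hs Hnz.
have eN : N = (N./2).*2.+1 by rewrite -{1}(odd_double_half N) oN.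
have es' : s = (s./2).*2 by rewrite -{1}(odd_double_half s) (negbTE es).
set u := N./2 in eN; set t := s./2 in es'.
have Htu : (t.+2 <= u)%N.
  move: Hs; rewrite eN {1}es' -!muln2; lia.
have h1 : ((N - 1)./2 = u)%N by rewrite eN subn1 /= doubleK.
have h2 : ((N + 1)./2 = u.+1)%N by rewrite eN addn1 -doubleS doubleK.
rewrite /lastcol /= negbK (negbTE es) h1 h2.
have -> : (s./2 = t)%N by [].
rewrite (@big_ltn _ _ _ t.+1 u.+1); last by lia.
rewrite (@big_ltn _ _ _ t.+1 u.+2); last by lia.
have -> : (2 * t.+1 - 1 = s.+1)%N by rewrite es' -muln2; lia.
have -> : (2 * t.+1 - 2 = s)%N by rewrite es' -muln2; lia.
have -> : (t.+1 == u.+1) = false by apply/negbTE; rewrite eqSS; apply/eqP; lia.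
have -> : (t.+2 == u.+1) = false by apply/negbTE; rewrite eqSS; apply/eqP; lia.
have hsnz : hv s != 0 by apply: Hnz; lia.
have Qnz : \prod_(t.+2 <= j < u.+2) hv (2 * j - 2)%N != 0.
  apply: prod_nz => j /andP[_ Hj]; apply: Hnz; rewrite eN -muln2; lia.
set P := \prod_(_ <= _ < _) _.
field.
by rewrite Qnz hsnz.
Qed.


Lemma at_lt (hv : nat -> R) p q : (q < N)%N ->
  at_ hv p q = if q == p.+1 then hv p else if p == q.+1 then - hv q else 0.
Proof. by rewrite /at_ => ->. Qed.

Lemma col_sum (hv : nat -> R) (F : nat -> R) c : (c < N)%N ->
  \sum_(p < N.+1) F p * at_ hv p c =
  (if (0 < c)%N then F c.-1 * hv c.-1 else 0) - F c.+1 * hv c.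
Proof.
case: c => [|c] Hc /=.
  rewrite (pick1 (F := fun p : nat => F p * at_ hv p 0) (a := 1%N)); last 2 first.
  - by [].
  - move=> p _ Hp; rewrite at_lt //= (negbTE Hp) mulr0 //.
  by rewrite at_lt //=; ring.
rewrite (pick2 (F := fun p : nat => F p * at_ hv p c.+1) (a := c) (b := c.+2)); last 4 first.
- lia.
- lia.
- by rewrite eq_sym; apply/eqP; lia.
- move=> p _ Hp1 Hp2; rewrite at_lt // eqSS eq_sym (negbTE Hp1) (negbTE Hp2) mulr0 //.
rewrite !at_lt // eqxx.
have -> : (c.+1 == c.+3) = false by apply/negbTE/eqP; lia.
by rewrite eqxx; ring.
Qed.

Lemma AL (hv : nat -> R) r : odd N -> (r <= N - 3)%N ->
  (forall j, (j <= N)%N -> hv j != 0) ->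
  \sum_(p < N.+1) at_ hv r p * lastcol N hv p = 0.
Proof.
move=> oN Hr Hnz.
case oR: (odd r).
  case: r oR Hr => [//|r] oR Hr.
  have er : ~~ odd r by move: oR => /= ->.
  have Hne : (r.+1 != N - 3)%N.
    apply/negP => /eqP E; move: oR; rewrite E oddB; last by lia.
    by rewrite oN.
  rewrite (pick2 (F := fun p : nat => at_ hv r.+1 p * lastcol N hv p) (a := r) (b := r.+2)); last 4 first.
  - lia.
  - lia.
  - by apply/eqP; lia.
  - move=> p Hp Hp1 Hp2; rewrite /at_; case: ifP => HpN.
      rewrite (negbTE Hp2); case: eqP => [E|_]; last by rewrite mul0r.
      by move: E => /eqP; rewrite eqSS eq_sym (negbTE Hp1).
    have -> : p = N by lia.
    by rewrite (lastcol_odd _ oN) mulr0.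
  rewrite !at_lt; try lia.
  have -> : (r == r.+2) = false by apply/negbTE/eqP; lia.
  rewrite !eqxx.
  rewrite mulNr (lastcol_rec oN er _ Hnz) ?addNr //; lia.
apply: big1 => p _; rewrite /at_; case: ifP => HpN.
  case: eqP => [->|_]; first by rewrite lastcol_odd ?mulr0 //= oR.
  case: eqP => [E|_]; last by rewrite mul0r.
  by rewrite lastcol_odd ?mulr0 //; move: oR; rewrite E /= => /negbT; rewrite negbK.
have -> : (p : nat) = N by move: (ltn_ord p); lia.
by rewrite (lastcol_odd _ oN) mulr0.
Qed.


Fixpoint rho (a : nat -> nat -> R) (m : nat) (q : nat) : R :=
  match m with 0 => (q == 1%N)%:R | m'.+1 => \sum_(p < N.+1) rho a m' p * a p q end.

Lemma rho_rel (s a a' : nat -> nat -> R) : (1 <= N)%N ->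
 (forall r q, (r <= N)%N -> (q <= N)%N ->
    \sum_(p < N.+1) s r p * a p q = \sum_(p < N.+1) a' r p * s p q) ->
 (forall q, (q <= N)%N -> s 1%N q = (q == 1%N)%:R) ->
 forall m q, (q <= N)%N -> \sum_(p < N.+1) rho a' m p * s p q = rho a m q.
Proof.
move=> HN PE R1; elim=> [|m IH] q Hq /=.
  rewrite (pick1 (F := fun p : nat => (p == 1%N)%:R * s p q) (a:=1%N)); last 2 first.
  - by [].
  - by move=> p _ /negbTE ->; rewrite mul0r.
  by rewrite eqxx mul1r R1.
transitivity (\sum_(r < N.+1) \sum_(p < N.+1) rho a' m r * (a' r p * s p q)).
  rewrite exchange_big /=; apply eq_bigr => p _; rewrite mulr_suml.
  by apply eq_bigr => r _; rewrite mulrA.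
transitivity (\sum_(r < N.+1) \sum_(p < N.+1) rho a' m r * (s r p * a p q)).
  apply eq_bigr => r _; rewrite -!mulr_sumr PE //; move: (ltn_ord r); lia.
rewrite exchange_big /=; apply eq_bigr => p _; rewrite -IH; last by move: (ltn_ord p); lia.
by rewrite mulr_suml; apply eq_bigr => r _; rewrite mulrA.
Qed.

Lemma rho_shape (hv : nat -> R) : odd N -> (forall j, (j <= N)%N -> hv j != 0) ->
  forall m, (m <= N - 2)%N ->
  (forall q, (m.+1 < q)%N -> (q <= N)%N -> rho (at_ hv) m q = 0) /\
  rho (at_ hv) m m.+1 = \prod_(1 <= i < m.+1) hv i.
Proof.
move=> oN Hnz; elim/ltn_ind => m IH Hm.
case: m IH Hm => [|m] IH Hm.
  split; first by move=> q Hq _ /=; rewrite (_: (q == 1%N) = false) //; apply/negbTE/eqP; lia.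
  by rewrite /= big_geq.
have Hm' : (m <= N - 2)%N by lia.
have [S1 F1] := IH m (ltnSn m) Hm'.
have Supp : forall q, (m.+2 < q)%N -> (q <= N)%N -> rho (at_ hv) m.+1 q = 0.
  move=> q Hq HqN /=.
  case: (ltnP q N) => HqN'.
    apply: big1 => p _; rewrite at_lt //; case: eqP => [E|_].
      by rewrite S1 ?mul0r //; move: (ltn_ord p); lia.
    case: eqP => [E|_]; last by rewrite mulr0.
    by rewrite S1 ?mul0r //; move: (ltn_ord p); lia.
  have -> : q = N by lia.
  rewrite (eq_bigr (fun p : 'I_N.+1 => rho (at_ hv) m p * lastcol N hv p)); last first.
    by move=> p _; rewrite /at_ ltnn.
  case: m IH S1 F1 Hm Hm' Hq => [|m0] IH S1 F1 Hm Hm' Hq.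
    rewrite (pick1 (F := fun p : nat => rho (at_ hv) 0 p * lastcol N hv p) (a := 1%N)); last 2 first.
    - lia.
    - by move=> p _ /= /negbTE ->; rewrite mul0r.
    by rewrite lastcol_odd ?mulr0.
  transitivity (\sum_(r < N.+1) rho (at_ hv) m0 r * \sum_(p < N.+1) at_ hv r p * lastcol N hv p).
    under eq_bigr => p _ do rewrite /= mulr_suml.
    rewrite exchange_big /=; apply eq_bigr => r _; rewrite mulr_sumr.
    by apply eq_bigr => p _; rewrite mulrA.
  apply: big1 => r _; case: (leqP r m0.+1) => Hr.
    by rewrite AL ?mulr0 //; lia.
  have Hm0 : (m0 <= N - 2)%N by lia.
  have [S0 _] := IH m0 (leqW (ltnSn m0)) Hm0.
  by rewrite S0 ?mul0r //; move: (ltn_ord r); lia.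
split=> //=.
have Ha : (m.+1 < N.+1)%N by lia.
rewrite (pick1 (F := fun p : nat => rho (at_ hv) m p * at_ hv p m.+2) Ha).
  rewrite F1 at_lt ?eqxx; last lia.
  by rewrite [RHS]big_nat_recr.

move=> p Hp Hpm; rewrite at_lt; last by lia.
rewrite eqSS eq_sym (negbTE Hpm); case: eqP => [E|_]; last by rewrite mulr0.
by rewrite S1 ?mul0r //; lia.
Qed.

End Aux.

Set Strict Implicit. Unset Implicit Arguments.

Theorem lemma5 (R : realFieldType) (N : nat) (h h' : nat -> R)
    (S : 'M[R]_(N.+1)) :
  odd N -> (5 <= N)%N ->
  (forall j, (j <= N)%N -> h j != 0) ->
  (forall j, (j <= N)%N -> h' j != 0) ->
  S \in unitmx ->
  S *m Atilde N h = Atilde N h' *m S ->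
  S *m ecol R N.+1 1 = ecol R N.+1 1 ->
  (ecol R N.+1 2)^T *m S = (ecol R N.+1 2)^T ->
  forall k : nat, (3 <= k)%N -> (k <= N - 1)%N ->
    (exists eps : nat -> R,
        eps 1%N = 1 /\ eps 2%N = 1 /\
        (forall j, (3 <= j <= k)%N -> eps j = 1 \/ eps j = -1) /\
        (forall j : 'I_N.+1, (j < k)%N -> col j S = eps j.+1 *: ecol R N.+1 j.+1))
    /\ h 0%N = h' 0%N
    /\ `|h 1%N| = `|h' 1%N|
    /\ (forall j, (1 <= j <= k - 2)%N -> `|h j.+1| = `|h' j.+1|).
Proof.
move=> oN N5 hnz hnz' _ hS he1 he2 k k3 kN.
pose s := fun r q : nat => S (inord r) (inord q).
have sE1 : forall r (p : 'I_N.+1), S (inord r) p = s r p by move=> r p; rewrite /s inord_val.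
have sE2 : forall (p : 'I_N.+1) q, S p (inord q) = s p q by move=> p q; rewrite /s inord_val.
have sE : forall (p q : 'I_N.+1), S p q = s p q by move=> p q; rewrite /s !inord_val.
have PEo : forall i j : 'I_N.+1, \sum_(p < N.+1) s i p * at_ N h p j
                              = \sum_(p < N.+1) at_ N h' i p * s p j.
  move=> i j; have := congr1 (fun M : 'M[R]_N.+1 => M i j) hS; rewrite /= !mxE => E.
  rewrite (eq_bigr (fun p : 'I_N.+1 => S i p * Atilde N h p j)); last first.
    by move=> p _; rewrite sE Atilde_at.
  rewrite E; apply eq_bigr => p _; by rewrite sE Atilde_at.
have PE : forall r q, (r <= N)%N -> (q <= N)%N -> \sum_(p < N.+1) s r p * at_ N h p q
                              = \sum_(p < N.+1) at_ N h' r p * s p q.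
  move=> r q Hr Hq; have := PEo (inord r) (inord q); rewrite !inordK //.
have C0 : forall r, (r <= N)%N -> s r 0%N = (r == 0%N)%:R.
  move=> r Hr; have := congr1 (fun M : 'cV[R]_N.+1 => M (inord r) 0) he1; rewrite !mxE.
  rewrite (eq_bigr (fun p : 'I_N.+1 => s r p * ((p.+1 == 1)%N)%:R)); last first.
    by move=> p _; rewrite mxE sE1.
  rewrite (pick1 (F := fun p : nat => s r p * ((p.+1 == 1)%N)%:R) (ltn0Sn N)); last first.
    by move=> p _ /negbTE Hp; rewrite eqSS Hp mulr0.
  by rewrite eqxx mulr1 inordK // eqSS.
have R1 : forall q, (q <= N)%N -> s 1%N q = (q == 1%N)%:R.
  move=> q Hq; have := congr1 (fun M : 'rV[R]_N.+1 => M 0 (inord q)) he2; rewrite !mxE.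
  rewrite (eq_bigr (fun p : 'I_N.+1 => ((p.+1 == 2)%N)%:R * s p q)); last first.
    by move=> p _; rewrite !mxE sE2.
  have Ha : (1 < N.+1)%N by lia.
  rewrite (pick1 (F := fun p : nat => ((p.+1 == 2)%N)%:R * s p q) Ha); last first.
    by move=> p _ /negbTE Hp; rewrite eqSS Hp mul0r.
  by rewrite eqxx mul1r inordK // eqSS.
have N1 : (1 <= N)%N by lia.
have Rrel := rho_rel N1 PE R1.
pose eps i := \prod_(0 <= j < i) (h' j / h j).
have epsS : forall i, eps i.+1 = eps i * (h' i / h i) by move=> i; rewrite /eps big_nat_recr.
have eps0 : eps 0%N = 1 by rewrite /eps big_geq.
have eps1 : eps 1%N = h' 0%N / h 0%N by rewrite epsS eps0 mul1r.
have Inv : forall c, (c <= N - 1)%N ->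
  [/\ (0 < c)%N -> eps 1%N = 1, forall i, (i <= c)%N -> eps i ^+ 2 = 1 &
      forall i r, (i <= c)%N -> (r <= N)%N -> s r i = eps i * (r == i)%:R].
  elim=> [|c IH] Hc.
    split => //; first by move=> i; rewrite leqn0 => /eqP ->; rewrite eps0 expr1n.
    by move=> i r; rewrite leqn0 => /eqP -> Hr; rewrite eps0 mul1r C0.
  have [Ie1 Isq Is] := IH (leq_trans (leqnSn c) Hc).
  have cN : (c < N)%N by lia.
  have hc : h c != 0 by apply: hnz; lia.
  have Hcol : forall r, (r <= N)%N -> s r c.+1 = eps c.+1 * (r == c.+1)%:R.
    move=> r Hr.
    have E := PE r c Hr (ltnW cN).
    rewrite col_sum // in E.
    rewrite (eq_bigr (fun p : 'I_N.+1 => at_ N h' r p * (eps c * (p == c :> nat)%:R))) in E; last first.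
      by move=> p _; rewrite Is //; move: (ltn_ord p); lia.
    have Hc' : (c < N.+1)%N by lia.
    rewrite (pick1 (F := fun p : nat => at_ N h' r p * (eps c * (p == c)%:R)) Hc') in E; last first.
      by move=> p _ /negbTE ->; rewrite !mulr0.
    rewrite eqxx mulr1 at_lt // in E.
    case: (eqVneq r c.+1) => [Er|Hr1].
      subst r.
      have Hprev : (if (0 < c)%N then s c.+1 c.-1 * h c.-1 else 0) = 0.
        case: ifP => // c0; rewrite Is; [|lia|lia].
        by rewrite (_ : (c.+1 == c.-1) = false) ?mulr0 ?mul0r //; apply/negbTE/eqP; lia.
      rewrite Hprev (_ : (c == c.+2) = false) in E; last by apply/negbTE/eqP; lia.
      rewrite eqxx in E.
      move/eqP: E; rewrite sub0r mulNr eqr_opp => /eqP E'.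
      by rewrite epsS mulr1 mulrA [eps c * _]mulrC -E'; field.
    rewrite mulr0.
    case: (eqVneq c r.+1) => [Ec|Hc1].
      subst c.
      rewrite /= Is // eqxx mulr1 in E.
      have sqr : h' r ^+ 2 = h r ^+ 2.
        have := Isq r.+1 (leqnn _); rewrite epsS exprMn Isq // mul1r expr_div_n => E2.
        have hr : h r ^+ 2 != 0 by rewrite expf_neq0 //; apply: hnz; lia.
        by rewrite -[h' r ^+ 2](divfK hr) E2 mul1r.
      have hr : h r != 0 by apply: hnz; lia.
      have : s r r.+2 * h r.+1 = 0.
        rewrite eqxx epsS in E.
        have -> : s r r.+2 * h r.+1 = eps r * h r - h' r * (eps r * (h' r / h r)) by rewrite -E; ring.
        rewrite (_ : h' r * (eps r * (h' r / h r)) = eps r * h' r ^+ 2 / h r); last by ring.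
        by rewrite sqr; field.
      by move/eqP; rewrite mulf_eq0 (negbTE hc) orbF => /eqP.
    have Hprev : (if (0 < c)%N then s r c.-1 * h c.-1 else 0) = 0.
      case: ifP => // c0; rewrite Is; [|lia|lia].
      by rewrite (_ : (r == c.-1) = false) ?mulr0 ?mul0r //; apply/negbTE/eqP; move: Hc1 => /eqP; lia.
    rewrite Hprev (negbTE Hc1) (negbTE Hr1) mul0r sub0r in E.
    by move/eqP: E; rewrite oppr_eq0 mulf_eq0 (negbTE hc) orbF => /eqP.
  have Hc2 : (c <= N - 2)%N by lia.
  have [_ F] := rho_shape oN hnz Hc2.
  have [_ F'] := rho_shape oN hnz' Hc2.
  have Hc1N : (c.+1 <= N)%N by lia.
  have Hrow := Rrel c c.+1 Hc1N.
  rewrite (eq_bigr (fun p : 'I_N.+1 => rho N (at_ N h') c p * (eps c.+1 * (p == c.+1 :> nat)%:R))) in Hrow; last first.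
    by move=> p _; rewrite Hcol //; move: (ltn_ord p); lia.
  have Hc1' : (c.+1 < N.+1)%N by lia.
  rewrite (pick1 (F := fun p : nat => rho N (at_ N h') c p * (eps c.+1 * (p == c.+1)%:R)) Hc1') in Hrow; last first.
    by move=> p _ /negbTE ->; rewrite !mulr0.
  rewrite eqxx mulr1 F F' in Hrow.
  set P := \prod_(1 <= i < c.+1) h i in Hrow.
  set P' := \prod_(1 <= i < c.+1) h' i in Hrow.
  have Pnz : P != 0 by apply: prod_nz => j /andP[_ Hj]; apply: hnz; lia.
  have e1 : h' 0%N / h 0%N = 1.
    case: (posnP c) => [c0|cpos]; last by rewrite -eps1 Ie1.
    move: Hrow; rewrite /P /P' c0 !big_geq // mul1r => <-.
    by rewrite eps1.
  have epsP : eps c.+1 = P' / P.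
    by rewrite /eps big_ltn // e1 mul1r prodf_div.
  have Hsq : eps c.+1 ^+ 2 = 1.
    have HP : P * P = P' * P'.
      by rewrite -{1}Hrow epsP; field.
    have PPnz : P * P != 0 by rewrite mulf_neq0.
    rewrite epsP expr2 (_ : P' / P * (P' / P) = (P' * P') / (P * P)); last by field.
    by rewrite -HP divff.
  split.
  - by move=> _; rewrite eps1 e1.
  - move=> i; rewrite leq_eqVlt => /orP[/eqP ->|]; first exact: Hsq.
    by rewrite ltnS; apply: Isq.
  - move=> i r; rewrite leq_eqVlt => /orP[/eqP ->|]; first exact: Hcol.
    by rewrite ltnS; apply: Is.
have [Ie1 Isq Is] := Inv k kN.
have hsq : forall i, (i < k)%N -> h' i ^+ 2 = h i ^+ 2.
  move=> i Hi; have := Isq i.+1 Hi; rewrite epsS exprMn (Isq i (ltnW Hi)) mul1r expr_div_n => E2.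
  have hr : h i ^+ 2 != 0 by rewrite expf_neq0 //; apply: hnz; lia.
  by rewrite -[h' i ^+ 2](divfK hr) E2 mul1r.
have habs : forall i, (i < k)%N -> `|h i| = `|h' i|.
  move=> i /hsq /eqP; rewrite eqf_sqr => /orP[/eqP->|/eqP->] //; by rewrite normrN.
have h00 : h 0%N = h' 0%N.
  have E := Ie1 (_ : (0 < k)%N); rewrite eps1 in E.
  have hz : h 0%N != 0 by apply: hnz.
  by rewrite -[h' 0%N](divfK hz) E ?mul1r //; lia.
split; last first.
  split=> //; split; first by apply: habs; lia.
  move=> j /andP[_ Hj]; apply: habs; lia.
exists (fun j => eps j.-1); split=> /=; first exact: eps0.
split; first by apply: Ie1; lia.
split.
  move=> j /andP[Hj1 Hj2]; have Hj' : (j.-1 <= k)%N by lia.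
  have := Isq j.-1 Hj'.
  by move/eqP; rewrite sqrf_eq1 => /orP[/eqP->|/eqP->]; [left|right].
move=> j Hj; apply/matrixP => r c'; rewrite !mxE sE Is ?eqSS //; last by move: (ltn_ord r); lia.
lia.
Qed.
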